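(* Let $g:\mathbb Z\times\mathbb Z\to[0,\infty)$ be bounded by a polynomial in $|y|$ and $|z|$. Then for every $\theta\in(\underline\theta,\bar\theta)$, $$\mathbf E^\theta\big[(p(\omega_0,\omega_1)+q(\omega_0,\omega_1))\,g(\omega_0,\omega_1)\big]<\infty,$$ where $\omega_0,\omega_1$ are independent with law $\mu^\theta$.
   Context: Fix extended integers $-\infty\le\omega^{\min}\le0$, $1\le\omega^{\max}\le\infty$, $I=\{z\in\mathbb Z:\omega^{\min}-1<z<\omega^{\max}+1\}$. Rates $p,q:I\times I\to[0,\infty)$ satisfy: (R1) $p(\omega^{\min},\cdot)\equiv p(\cdot,\omega^{\max})\equiv q(\omega^{\max},\cdot)\equiv q(\cdot,\omega^{\min})\equiv0$ whenever the corresponding boundary is finite; either $p,q$ are both strictly positive in all other cases, or one is identically $0$. (R2) $p(z+1,y)\ge p(z,y)$, $p(y,z+1)\le p(y,z)$, $q(z+1,y)\le q(z,y)$, $q(y,z+1)\ge q(y,z)$ whenever $y,z,z+1\in I$. (R3) For all $x,y,z\in I$: $p(x,y)+p(y,z)+p(z,x)+q(x,y)+q(y,z)+q(z,x)=p(x,z)+p(z,y)+p(y,x)+q(x,z)+q(z,y)+q(y,x)$. (R4) There are symmetric functions $s_p,s_q$ on $I\times I$ and $f:I\to[0,\infty)$ with $f(\omega^{\min})=0$ if finite and $f(z)>0$ for $z>\omega^{\min}$, such that $p(y,z)=s_p(y,z+1)f(y)$, $q(y,z)=s_q(y+1,z)f(z)$ ($s_p,s_q$ read as $0$ if an argument exceeds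 $\omega^{\max}$). Set $f(0)!=1$, $f(z)!=\prod_{y=1}^zf(y)$ ($z>0$), $f(z)!=1/\prod_{y=z+1}^0f(y)$ ($z<0$); $\bar\theta=\lim_{z\to\infty}\log f(z)$ if $\omega^{\max}=\infty$, else $\infty$; $\underline\theta=\lim_{z\to\infty}\log f(-z)$ if $\omega^{\min}=-\infty$, else $-\infty$; assume $\underline\theta<\bar\theta$. For $\theta\in(\underline\theta,\bar\theta)$, $\mu^\theta(z)=e^{\theta z}/(Z(\theta)f(z)!)$ with $Z(\theta)=\sum_{z\in I}e^{\theta z}/f(z)!<\infty$; $\mathbf E^\theta$ is expectation under the product of $\mu^\theta$. *)

(* Defs.v *)
From Stdlib Require Import Bool Reals ZArith List.
From Coquelicot Require Import Coquelicot.
Open Scope R_scope.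

(* Extended integer boundaries: [wmin = None] means omega^min = -oo,
   [wmax = None] means omega^max = +oo. *)

Definition inIb (wmin wmax : option Z) (z : Z) : bool :=
  andb (match wmin with Some m => Z.leb m z | None => true end)
  (match wmax with Some M => Z.leb z M | None => true end).

Definition inI (wmin wmax : option Z) (z : Z) : Prop := inIb wmin wmax z = true.

Definition bounds_ok (wmin wmax : option Z) : Prop :=
  (forall m, wmin = Some m -> (m <= 0)%Z) /\ (forall M, wmax = Some M -> (1 <= M)%Z).

Definition rates_nonneg (wmin wmax : option Z) (p q : Z -> Z -> R) : Prop :=
  forall x y, inI wmin wmax x -> inI wmin wmax y -> 0 <= p x y /\ 0 <= q x y.

Definition rates_R1 (wmin wmax : option Z) (p q : Z -> Z -> R) : Prop :=
  (forall m, wmin = Some m -> forall y, inI wmin wmax y -> p m y = 0 /\ q y m = 0) /\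
  (forall M, wmax = Some M -> forall y, inI wmin wmax y -> p y M = 0 /\ q M y = 0) /\
  ( ( (forall x y, inI wmin wmax x -> inI wmin wmax y ->
         wmin <> Some x -> wmax <> Some y -> 0 < p x y) /\
      (forall x y, inI wmin wmax x -> inI wmin wmax y ->
         wmax <> Some x -> wmin <> Some y -> 0 < q x y) )
    \/ (forall x y, inI wmin wmax x -> inI wmin wmax y -> p x y = 0)
    \/ (forall x y, inI wmin wmax x -> inI wmin wmax y -> q x y = 0) ).

Definition rates_R2 (wmin wmax : option Z) (p q : Z -> Z -> R) : Prop :=
  forall y z, inI wmin wmax y -> inI wmin wmax z -> inI wmin wmax (z + 1)%Z ->
    p (z + 1)%Z y >= p z y /\ p y (z + 1)%Z <= p y z /\
    q (z + 1)%Z y <= q z y /\ q y (z + 1)%Z >= q y z.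

Definition rates_R3 (wmin wmax : option Z) (p q : Z -> Z -> R) : Prop :=
  forall x y z, inI wmin wmax x -> inI wmin wmax y -> inI wmin wmax z ->
    p x y + p y z + p z x + q x y + q y z + q z x =
    p x z + p z y + p y x + q x z + q z y + q y x.

(* "s read as 0 if an argument exceeds omega^max" *)
Definition exceeds (wmax : option Z) (a : Z) : bool :=
  match wmax with Some M => Z.ltb M a | None => false end.

Definition ext0 (wmax : option Z) (s : Z -> Z -> R) (a b : Z) : R :=
  if orb (exceeds wmax a) (exceeds wmax b) then 0 else s a b.

Definition rates_R4 (wmin wmax : option Z) (p q : Z -> Z -> R)
    (sp sq : Z -> Z -> R) (f : Z -> R) : Prop :=
  (forall a b, inI wmin wmax a -> inI wmin wmax b -> sp a b = sp b a /\ sq a b = sq b a) /\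
  (forall z, inI wmin wmax z -> 0 <= f z) /\
  (forall m, wmin = Some m -> f m = 0) /\
  (forall z, inI wmin wmax z ->
     (match wmin with Some m => (m < z)%Z | None => True end) -> 0 < f z) /\
  (forall y z, inI wmin wmax y -> inI wmin wmax z ->
     p y z = ext0 wmax sp y (z + 1)%Z * f y /\
     q y z = ext0 wmax sq (y + 1)%Z z * f z).

Fixpoint prodZ (f : Z -> R) (a : Z) (n : nat) : R :=
  match n with
  | O => 1
  | S k => f a * prodZ f (a + 1)%Z k
  end.

Definition zfact (f : Z -> R) (z : Z) : R :=
  match z with
  | Z0 => 1
  | Zpos _ => prodZ f 1%Z (Z.to_nat z)
  | Zneg _ => / prodZ f (z + 1)%Z (Z.to_nat (- z))
  end.

Definition theta_bar_spec (wmax : option Z) (f : Z -> R) (tb : Rbar) : Prop :=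
  (wmax = None -> is_lim_seq (fun n : nat => ln (f (Z.of_nat n))) tb) /\
  (wmax <> None -> tb = p_infty).

Definition theta_low_spec (wmin : option Z) (f : Z -> R) (tl : Rbar) : Prop :=
  (wmin = None -> is_lim_seq (fun n : nat => ln (f (- Z.of_nat n)%Z)) tl) /\
  (wmin <> None -> tl = m_infty).

Definition zterm (wmin wmax : option Z) (f : Z -> R) (th : R) (z : Z) : R :=
  if inIb wmin wmax z then exp (th * IZR z) / zfact f z else 0.

Definition Zpart (wmin wmax : option Z) (f : Z -> R) (th : R) : R :=
  Series (fun n : nat => zterm wmin wmax f th (Z.of_nat n)) +
  Series (fun n : nat => zterm wmin wmax f th (- Z.of_nat n - 1)%Z).

Definition mu (wmin wmax : option Z) (f : Z -> R) (th : R) (z : Z) : R :=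
  exp (th * IZR z) / (Zpart wmin wmax f th * zfact f z).

Definition zrange (N : nat) : list Z :=
  map (fun k : nat => (Z.of_nat k - Z.of_nat N)%Z) (seq 0 (2 * N + 1)).

Definition sumZ (N : nat) (F : Z -> R) : R :=
  fold_right (fun z acc => F z + acc) 0 (zrange N).

Definition box_expect (wmin wmax : option Z) (f : Z -> R) (th : R)
    (h : Z -> Z -> R) (N : nat) : R :=
  sumZ N (fun y => sumZ N (fun z =>
    if andb (inIb wmin wmax y) (inIb wmin wmax z)
    then mu wmin wmax f th y * mu wmin wmax f th z * h y z else 0)).

(* E^theta[h(omega_0, omega_1)] < oo for nonnegative h, omega_0, omega_1 iid mu^theta:
   the (nonnegative) sum over I x I is finite, i.e. its partial sums are bounded. *)
Definition finite_expectation2 (wmin wmax : option Z) (f : Z -> R) (th : R)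
    (h : Z -> Z -> R) : Prop :=
  exists B : R, forall N : nat, box_expect wmin wmax f th h N <= B.

Definition poly_bounded (g : Z -> Z -> R) : Prop :=
  exists (d : nat) (c : nat -> nat -> R), forall y z : Z,
    g y z <= sum_f_R0 (fun i => sum_f_R0 (fun j =>
               c i j * Rabs (IZR y) ^ i * Rabs (IZR z) ^ j) d) d.

(* Main.v *)
Require Import Defs.
From Stdlib Require Import Bool Reals ZArith Lia Lra List.
From Coquelicot Require Import Coquelicot.
Open Scope R_scope.
Arguments inI wmin wmax z%_Z_scope.
Arguments inIb wmin wmax z%_Z_scope.

Lemma inI_iff wmin wmax z : inI wmin wmax z <->
  ((forall m, wmin = Some m -> (m <= z)%Z) /\ (forall M, wmax = Some M -> (z <= M)%Z)).
Proof.
  unfold inI, inIb; destruct wmin as [m|], wmax as [M|]; simpl.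
  all: rewrite ?andb_true_iff, ?andb_true_r, ?Z.leb_le.
  all: split; [intros H; split; intros ? E; inversion E; subst; lia|].
  all: intros [H1 H2].
  all: try split.
  all: try (apply H1; reflexivity); try (apply H2; reflexivity); auto.
Qed.

Lemma inI_conv wmin wmax a b c : inI wmin wmax a -> inI wmin wmax b ->
  (a <= c <= b)%Z -> inI wmin wmax c.
Proof.
  rewrite !inI_iff. intros [A1 A2] [B1 B2] H. split.
  - intros m E. specialize (A1 m E). lia.
  - intros M E. specialize (B2 M E). lia.
Qed.

Lemma inI_0 wmin wmax : bounds_ok wmin wmax -> inI wmin wmax 0.
Proof. intros [H1 H2]. apply inI_iff. split; intros ? E; [apply H1 in E|apply H2 in E]; lia. Qed.
Lemma inI_1 wmin wmax : bounds_ok wmin wmax -> inI wmin wmax 1.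
Proof. intros [H1 H2]. apply inI_iff. split; intros ? E; [apply H1 in E|apply H2 in E]; lia. Qed.

Lemma mono_Z wmin wmax (h : Z -> R) :
  (forall z, inI wmin wmax z -> inI wmin wmax (z+1)%Z -> h z <= h (z+1)%Z) ->
  forall a b, inI wmin wmax a -> inI wmin wmax b -> (a <= b)%Z -> h a <= h b.
Proof.
  intros Hm a b Ha Hb Hab.
  assert (E : b = (a + Z.of_nat (Z.to_nat (b - a)))%Z) by lia.
  rewrite E in Hb |- *. clear E Hab. revert Hb. generalize (Z.to_nat (b - a)) as n. intros n.
  induction n as [|n IH]; intros Hb.
  - simpl. rewrite Z.add_0_r. lra.
  - assert (Hn : inI wmin wmax (a + Z.of_nat n)) by (apply (inI_conv _ _ a (a + Z.of_nat (S n))); auto; lia).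
    eapply Rle_trans. apply IH; auto.
    replace (a + Z.of_nat (S n))%Z with ((a + Z.of_nat n) + 1)%Z by lia.
    apply Hm; auto. replace ((a + Z.of_nat n) + 1)%Z with (a + Z.of_nat (S n))%Z by lia. auto.
Qed.

Lemma anti_Z wmin wmax (h : Z -> R) :
  (forall z, inI wmin wmax z -> inI wmin wmax (z+1)%Z -> h (z+1)%Z <= h z) ->
  forall a b, inI wmin wmax a -> inI wmin wmax b -> (a <= b)%Z -> h b <= h a.
Proof.
  intros Hm a b Ha Hb Hab.
  assert (H := mono_Z wmin wmax (fun z => - h z)). simpl in H.
  assert (- h a <= - h b). { apply H; auto. intros z H1 H2. specialize (Hm z H1 H2). lra. }
  lra.
Qed.

Definition lsum (l : list Z) (F : Z -> R) : R := fold_right (fun z acc => F z + acc) 0 l.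

Lemma lsum_le l F G : (forall z, F z <= G z) -> lsum l F <= lsum l G.
Proof. intros H; induction l; simpl; [lra|]. specialize (H a). lra. Qed.

Lemma lsum_scal l F c : lsum l (fun z => c * F z) = c * lsum l F.
Proof. induction l; simpl; [ring|]. rewrite IHl. ring. Qed.

Lemma lsum_nonneg l F : (forall z, 0 <= F z) -> 0 <= lsum l F.
Proof. intros H; induction l; simpl; [lra|]. specialize (H a). lra. Qed.

Lemma lsum_cons a l F : lsum (a :: l) F = F a + lsum l F.
Proof. reflexivity. Qed.

Lemma lsum_app l1 l2 F : lsum (l1 ++ l2) F = lsum l1 F + lsum l2 F.
Proof. induction l1; simpl; [ring|]. rewrite IHl1. ring. Qed.

Lemma sumZ_lsum N F : sumZ N F = lsum (zrange N) F.
Proof. reflexivity. Qed.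

Lemma zrange_S N : zrange (S N) =
  (- Z.of_nat (S N))%Z :: zrange N ++ (Z.of_nat (S N) :: nil).
Proof.
  unfold zrange.
  replace (2 * S N + 1)%nat with (S (S (2 * N + 1))) by lia.
  set (m := (2 * N + 1)%nat).
  rewrite seq_S. change (seq 0 (S m)) with (0%nat :: seq 1 m).
  rewrite map_app. cbn [map app].
  f_equal.
  f_equal.
  - rewrite <- seq_shift, map_map. apply map_ext. intros k. lia.
  - f_equal. unfold m. lia.
Qed.

Lemma sumZ_abs_le (b : nat -> R) N : (forall n, 0 <= b n) ->
  sumZ N (fun z => b (Z.abs_nat z)) <= 2 * sum_f_R0 b N.
Proof.
  intros Hb. induction N as [|N IH].
  - unfold sumZ, zrange. simpl. specialize (Hb 0%nat). lra.
  - rewrite sumZ_lsum, zrange_S, lsum_cons, lsum_app, lsum_cons.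
    rewrite <- sumZ_lsum. simpl sum_f_R0.
    replace (Z.abs_nat (- Z.of_nat (S N))) with (S N) by (rewrite <- Zabs2Nat.id at 1; apply Nat2Z.inj; rewrite !Zabs2Nat.id_abs; lia).
    rewrite Zabs2Nat.id. change (lsum nil _) with 0. lra.
Qed.

Lemma sum_term_le (a : nat -> R) N n : (forall k, 0 <= a k) -> (n <= N)%nat -> a n <= sum_f_R0 a N.
Proof.
  intros Ha. induction N as [|N IH]; intros Hn.
  - inversion Hn; subst. simpl. lra.
  - simpl. destruct (Nat.eq_dec n (S N)) as [->|Hne]. 
    + assert (0 <= sum_f_R0 a N) by (apply cond_pos_sum; auto). lra.
    + assert (a n <= sum_f_R0 a N) by (apply IH; lia). specialize (Ha (S N)). lra.
Qed.

Lemma geo (u : nat -> R) (r : R) (N0 : nat) : 0 < r -> (forall n, 0 <= u n) ->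
  (forall n, (N0 <= n)%nat -> u (S n) <= r * u n) ->
  exists C, 0 <= C /\ forall n, u n <= C * r ^ n.
Proof.
  intros Hr Hu Hrec.
  set (C := sum_f_R0 (fun k => u k / r ^ k) N0).
  assert (Hpos : forall k, 0 <= u k / r ^ k).
  { intros k. apply Rdiv_le_0_compat; auto. apply pow_lt; auto. }
  assert (HC0 : 0 <= C) by (apply cond_pos_sum; auto).
  assert (Hsmall : forall n, (n <= N0)%nat -> u n <= C * r ^ n).
  { intros n Hn. assert (H := sum_term_le _ N0 n Hpos Hn). fold C in H.
    assert (0 < r ^ n) by (apply pow_lt; auto).
    apply (Rmult_le_compat_r (r ^ n)) in H; [|lra].
    unfold Rdiv in H. rewrite Rmult_assoc, Rinv_l in H by lra. lra. }
  exists C. split; auto. intros n.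
  destruct (le_lt_dec n N0) as [Hn|Hn]; auto.
  replace n with (N0 + (n - N0))%nat by lia. generalize (n - N0)%nat as k. intros k.
  induction k as [|k IH].
  - rewrite Nat.add_0_r. auto.
  - replace (N0 + S k)%nat with (S (N0 + k)) by lia.
    eapply Rle_trans. apply Hrec; lia.
    simpl. apply (Rmult_le_compat_l r) in IH; lra.
Qed.

Lemma geo_sum (C s : R) N : 0 <= C -> 0 <= s < 1 ->
  sum_f_R0 (fun n => C * s ^ n) N <= C / (1 - s).
Proof.
  intros HC Hs.
  assert (H : sum_f_R0 (fun n => s ^ n) N <= / (1 - s)).
  { rewrite tech3 by lra.
    assert (0 <= s ^ S N) by (apply pow_le; lra).
    unfold Rdiv. rewrite <- (Rmult_1_l (/ (1 - s))) at 2. apply Rmult_le_compat_r. left; apply Rinv_0_lt_compat; lra. lra. }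
  replace (sum_f_R0 (fun n => C * s ^ n) N) with (C * sum_f_R0 (fun n => s ^ n) N).
  2:{ rewrite scal_sum. apply sum_eq. intros; ring. }
  unfold Rdiv. apply Rmult_le_compat_l; auto.
Qed.

Lemma bern d x : 0 <= x <= 1 -> (1 + x) ^ d <= 1 + (2 ^ d - 1) * x.
Proof.
  intros Hx. induction d as [|d IH].
  - simpl. lra.
  - assert (H2 : 1 <= 2 ^ d) by (apply pow_R1_Rle; lra).
    change ((1 + x) ^ S d) with ((1 + x) * (1 + x) ^ d).
    change (2 ^ S d) with (2 * 2 ^ d).
    apply Rle_trans with ((1 + x) * (1 + (2 ^ d - 1) * x)).
    + apply Rmult_le_compat_l; lra.
    + assert (0 <= (2 ^ d - 1) * (x * (1 - x))) by (apply Rmult_le_pos; [lra|apply Rmult_le_pos; lra]). nra.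
Qed.

Lemma poly_geo d rho : 0 < rho < 1 ->
  exists K, 0 <= K /\ forall n, rho ^ n * (1 + INR n) ^ d <= K * ((1 + rho) / 2) ^ n.
Proof.
  intros Hr. set (sg := (1 + rho) / 2). set (c := 2 ^ d - 1).
  assert (Hc : 0 <= c) by (unfold c; assert (1 <= 2 ^ d) by (apply pow_R1_Rle; lra); lra).
  destruct (INR_archimed 1 (c * rho / (sg - rho))) as [N0 HN0]; [lra|].
  rewrite Rmult_1_r in HN0.
  apply (geo (fun n => rho ^ n * (1 + INR n) ^ d) sg N0).
  - unfold sg; lra.
  - intros n. apply Rmult_le_pos; apply pow_le; [lra|]. pose proof (pos_INR n); lra.
  - intros n Hn. rewrite S_INR. 
    set (a := 1 + INR n).
    assert (Ha : 1 <= a) by (unfold a; pose proof (pos_INR n); lra).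
    assert (HaN : INR N0 <= INR n) by (apply le_INR; auto).
    assert (E : 1 + (INR n + 1) = a * (1 + / a)) by (rewrite Rmult_plus_distr_l, Rinv_r by lra; unfold a; ring).
    rewrite E, Rpow_mult_distr.
    assert (Hx : 0 <= / a <= 1).
    { split. left; apply Rinv_0_lt_compat; lra. rewrite <- Rinv_1. apply Rinv_le_contravar; lra. }
    assert (Hb := bern d (/ a) Hx). fold c in Hb.
    assert (Hpa : 0 <= a ^ d) by (apply pow_le; lra).
    assert (Hpr : 0 <= rho ^ n) by (apply pow_le; lra).
    change (rho ^ S n) with (rho * rho ^ n).
    assert (Hk : rho * (1 + c * / a) <= sg).
    { assert (sg - rho > 0) by (unfold sg; lra).
      assert (c * rho / (sg - rho) < a) by (unfold a; lra).
      assert (c * rho < a * (sg - rho)).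
      { apply (Rmult_lt_compat_r (sg - rho)) in H0; auto. unfold Rdiv in H0.
        rewrite Rmult_assoc, Rinv_l in H0 by lra. lra. }
      assert (c * / a * rho <= sg - rho).
      { apply (Rmult_le_reg_l a). lra. rewrite <- !Rmult_assoc.
        replace (a * c * / a * rho) with (c * rho * (a * / a)) by ring. rewrite Rinv_r by lra. lra. }
      lra. }
    apply Rle_trans with (rho * rho ^ n * (a ^ d * (1 + c * / a))).
    { apply Rmult_le_compat_l. apply Rmult_le_pos; lra. apply Rmult_le_compat_l; auto. }
    apply Rle_trans with ((rho * (1 + c * / a)) * (rho ^ n * a ^ d)); [right; ring|].
    apply Rmult_le_compat_r. apply Rmult_le_pos; auto. auto.
Qed.

Lemma prodZ_pos f a n : (forall k, (k < n)%nat -> 0 < f (a + Z.of_nat k)%Z) -> 0 < prodZ f a n.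
Proof.
  revert a; induction n as [|n IH]; intros a H; simpl; [lra|].
  apply Rmult_lt_0_compat.
  - specialize (H 0%nat). rewrite Z.add_0_r in H. apply H; lia.
  - apply IH. intros k Hk. replace (a + 1 + Z.of_nat k)%Z with (a + Z.of_nat (S k))%Z by lia.
    apply H; lia.
Qed.

Lemma prodZ_S_r f a n : prodZ f a (S n) = prodZ f a n * f (a + Z.of_nat n)%Z.
Proof.
  revert a; induction n as [|n IH]; intros a.
  - simpl. rewrite Z.add_0_r. ring.
  - change (prodZ f a (S (S n))) with (f a * prodZ f (a + 1)%Z (S n)).
    rewrite IH. simpl. replace (a + 1 + Z.of_nat n)%Z with (a + Z.pos (Pos.of_succ_nat n))%Z by lia. ring.
Qed.

Lemma zfact_nat f n : zfact f (Z.of_nat n) = prodZ f 1 n.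
Proof.
  destruct n as [|n]; [reflexivity|].
  change (zfact f (Z.of_nat (S n))) with (prodZ f 1 (Z.to_nat (Z.of_nat (S n)))).
  rewrite Nat2Z.id. reflexivity.
Qed.

Lemma zfact_negS f n : zfact f (- Z.of_nat (S n))%Z = / prodZ f (- Z.of_nat n)%Z (S n).
Proof.
  assert (Hz : (- Z.of_nat (S n))%Z = Z.neg (Pos.of_succ_nat n)) by reflexivity.
  rewrite Hz. unfold zfact. rewrite <- Hz. f_equal. f_equal; lia.
Qed.

Lemma zfact_succ f z : f (z + 1)%Z <> 0 -> zfact f (z + 1)%Z = zfact f z * f (z + 1)%Z.
Proof.
  intros Hf. destruct (Z_le_gt_dec 0 z) as [Hz|Hz].
  - replace z with (Z.of_nat (Z.to_nat z)) by lia. generalize (Z.to_nat z) as n. intros n.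
    replace (Z.of_nat n + 1)%Z with (Z.of_nat (S n)) by lia.
    rewrite !zfact_nat, prodZ_S_r. f_equal. f_equal. lia.
  - revert Hf. replace z with (- Z.of_nat (S (Z.to_nat (- z - 1))))%Z by lia.
    generalize (Z.to_nat (- z - 1)) as n. intros n Hf.
    replace (- Z.of_nat (S n) + 1)%Z with (- Z.of_nat n)%Z in * by lia.
    rewrite zfact_negS. destruct n as [|k].
    + simpl. simpl in Hf. field. auto.
    + rewrite (zfact_negS f k).
      change (prodZ f (- Z.of_nat (S k))%Z (S (S k))) with
        (f (- Z.of_nat (S k))%Z * prodZ f (- Z.of_nat (S k) + 1)%Z (S k)).
      replace (- Z.of_nat (S k) + 1)%Z with (- Z.of_nat k)%Z by lia.
      rewrite Rinv_mult.
      destruct (Req_dec (prodZ f (- Z.of_nat k)%Z (S k)) 0) as [h|h].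
      * rewrite h, Rinv_0. ring.
      * field. split; auto.
Qed.

Definition fpos_prop wmin wmax (f : Z -> R) := forall z, inI wmin wmax z ->
  (match wmin with Some m => (m < z)%Z | None => True end) -> 0 < f z.

Lemma fpos_gt wmin wmax f z w : fpos_prop wmin wmax f -> inI wmin wmax z -> inI wmin wmax w ->
  (w < z)%Z -> 0 < f z.
Proof.
  intros Hf Hz Hw Hlt. apply Hf; auto. destruct wmin as [m|]; auto.
  apply inI_iff in Hw. destruct Hw as [Hw _]. specialize (Hw m eq_refl). lia.
Qed.

Lemma zfact_pos wmin wmax f z : bounds_ok wmin wmax -> fpos_prop wmin wmax f ->
  inI wmin wmax z -> 0 < zfact f z.
Proof.
  intros Hb Hf Hz. destruct (Z_le_gt_dec 0 z) as [H0|H0].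
  - revert Hz. replace z with (Z.of_nat (Z.to_nat z)) by lia. intros Hz.
    rewrite zfact_nat. apply prodZ_pos. intros k Hk.
    apply (fpos_gt wmin wmax f _ 0%Z); auto.
    + apply (inI_conv _ _ 0 (Z.of_nat (Z.to_nat z))); auto; try (apply inI_0; auto); try lia.
    + apply inI_0; auto.
    + lia.
  - revert Hz. replace z with (- Z.of_nat (S (Z.to_nat (- z - 1))))%Z by lia.
    generalize (Z.to_nat (- z - 1)) as n. intros n Hz.
    rewrite zfact_negS. apply Rinv_0_lt_compat. apply prodZ_pos. intros k Hk.
    apply (fpos_gt wmin wmax f _ (- Z.of_nat (S n))%Z); auto.
    + apply (inI_conv _ _ (- Z.of_nat (S n))%Z 0); auto; try (apply inI_0; auto); try lia.
    + lia.
Qed.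

Definition nu wmin wmax (f : Z -> R) (th : R) (z : Z) : R :=
  if inIb wmin wmax z then exp (th * IZR z) / zfact f z else 0.

Lemma nu_nonneg wmin wmax f th z : bounds_ok wmin wmax -> fpos_prop wmin wmax f ->
  0 <= nu wmin wmax f th z.
Proof.
  intros Hb Hf. unfold nu. destruct (inIb wmin wmax z) eqn:E; [|lra].
  left. apply Rdiv_lt_0_compat. apply exp_pos. apply (zfact_pos wmin wmax); auto.
Qed.

Lemma nu_in wmin wmax f th z : inI wmin wmax z ->
  nu wmin wmax f th z = exp (th * IZR z) / zfact f z.
Proof. unfold nu, inI. intros H; rewrite H. reflexivity. Qed.

Lemma nu_out wmin wmax f th z : ~ inI wmin wmax z -> nu wmin wmax f th z = 0.
Proof. unfold nu, inI. intros H. destruct (inIb wmin wmax z); auto. now exfalso. Qed.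

Lemma nu_rec wmin wmax f th z : bounds_ok wmin wmax -> fpos_prop wmin wmax f ->
  inI wmin wmax z -> inI wmin wmax (z + 1) ->
  nu wmin wmax f th (z + 1) * f (z + 1)%Z = exp th * nu wmin wmax f th z.
Proof.
  intros Hb Hf Hz Hz1.
  assert (Hfz : 0 < f (z + 1)%Z) by (apply (fpos_gt wmin wmax f _ z); auto; lia).
  assert (Hzf : 0 < zfact f z) by (apply (zfact_pos wmin wmax); auto).
  rewrite !nu_in by auto. rewrite zfact_succ by lra.
  rewrite plus_IZR, Rmult_plus_distr_l, Rmult_1_r, exp_plus. field. lra.
Qed.

Lemma lim_ev_gt u l x : is_lim_seq u l -> Rbar_lt (Finite x) l ->
  exists y N, x < y /\ forall n, (N <= n)%nat -> y < u n.
Proof.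
  intros Hl Hx. apply is_lim_seq_spec in Hl. destruct l as [l| |]; simpl in Hx, Hl.
  - assert (He : 0 < (l - x) / 2) by lra.
    destruct (Hl (mkposreal _ He)) as [N HN]. exists ((x + l) / 2), N. split; [lra|].
    intros n Hn. specialize (HN n Hn). simpl in HN. apply Rabs_def2 in HN. lra.
  - destruct (Hl (x + 1)) as [N HN]. exists (x + 1), N. split; [lra|]. auto.
  - contradiction.
Qed.

Lemma lim_ev_lt u l x : is_lim_seq u l -> Rbar_lt l (Finite x) ->
  exists y N, y < x /\ forall n, (N <= n)%nat -> u n < y.
Proof.
  intros Hl Hx. apply is_lim_seq_spec in Hl. destruct l as [l| |]; simpl in Hx, Hl.
  - assert (He : 0 < (x - l) / 2) by lra.
    destruct (Hl (mkposreal _ He)) as [N HN]. exists ((x + l) / 2), N. split; [lra|].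
    intros n Hn. specialize (HN n Hn). simpl in HN. apply Rabs_def2 in HN. lra.
  - contradiction.
  - destruct (Hl (x - 1)) as [N HN]. exists (x - 1), N. split; [lra|]. auto.
Qed.

Lemma exp_lt1 x : x < 0 -> exp x < 1.
Proof. intros H. rewrite <- exp_0. apply exp_increasing. lra. Qed.

Lemma nu_pos_side wmin wmax f th thbar : bounds_ok wmin wmax -> fpos_prop wmin wmax f ->
  theta_bar_spec wmax f thbar -> Rbar_lt (Finite th) thbar ->
  exists N0 r, 0 < r < 1 /\ forall n, (N0 <= n)%nat ->
    nu wmin wmax f th (Z.of_nat (S n)) <= r * nu wmin wmax f th (Z.of_nat n).
Proof.
  intros Hb Hf [Hbar1 Hbar2] Hth.
  assert (Hnn := fun z => nu_nonneg wmin wmax f th z Hb Hf).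
  destruct wmax as [M|].
  - exists (Z.to_nat M), (/2). split; [lra|]. intros n Hn.
    rewrite nu_out. specialize (Hnn (Z.of_nat n)). lra.
    rewrite inI_iff. intros [_ H]. specialize (H M eq_refl). lia.
  - destruct (lim_ev_gt _ _ th (Hbar1 eq_refl) Hth) as [y [N [Hy HN]]].
    exists N, (exp (th - y)). split. split. apply exp_pos. apply exp_lt1; lra.
    intros n Hn.
    assert (HI : forall k : nat, inI wmin None (Z.of_nat k)).
    { intros k. apply inI_iff. split; [|discriminate]. intros m E. destruct Hb as [Hb _].
      specialize (Hb m E). lia. }
    assert (Hrec := nu_rec wmin None f th (Z.of_nat n) Hb Hf (HI n)).
    replace (Z.of_nat n + 1)%Z with (Z.of_nat (S n)) in Hrec by lia.
    specialize (Hrec (HI (S n))).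
    assert (Hfp : 0 < f (Z.of_nat (S n))).
    { apply (fpos_gt wmin None f _ 0%Z); auto. apply inI_0; auto. lia. }
    assert (Hl : y < ln (f (Z.of_nat (S n)))) by (apply HN; lia).
    assert (Hfy : exp y < f (Z.of_nat (S n))).
    { rewrite <- (exp_ln (f (Z.of_nat (S n)))) by auto. apply exp_increasing. auto. }
    specialize (Hnn (Z.of_nat n)). assert (Hn1 := nu_nonneg wmin None f th (Z.of_nat (S n)) Hb Hf).
    rewrite Rminus_def, exp_plus, exp_Ropp.
    assert (Hey := exp_pos y). assert (Het := exp_pos th).
    apply (Rmult_le_reg_r (exp y)); auto.
    replace (exp th * / exp y * nu wmin None f th (Z.of_nat n) * exp y)
      with (exp th * nu wmin None f th (Z.of_nat n)) by (field; lra).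
    rewrite <- Hrec. apply Rmult_le_compat_l; lra.
Qed.

Lemma nu_neg_side wmin wmax f th thlow : bounds_ok wmin wmax -> fpos_prop wmin wmax f ->
  theta_low_spec wmin f thlow -> Rbar_lt thlow (Finite th) ->
  exists N0 r, 0 < r < 1 /\ forall n, (N0 <= n)%nat ->
    nu wmin wmax f th (- Z.of_nat (S n))%Z <= r * nu wmin wmax f th (- Z.of_nat n)%Z.
Proof.
  intros Hb Hf [Hlow1 Hlow2] Hth.
  assert (Hnn := fun z => nu_nonneg wmin wmax f th z Hb Hf).
  destruct wmin as [m|].
  - exists (Z.to_nat (- m)), (/2). split; [lra|]. intros n Hn.
    rewrite nu_out. specialize (Hnn (- Z.of_nat n)%Z). lra.
    rewrite inI_iff. intros [H _]. specialize (H m eq_refl). lia.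
  - destruct (lim_ev_lt _ _ th (Hlow1 eq_refl) Hth) as [y [N [Hy HN]]].
    exists N, (exp (y - th)). split. split. apply exp_pos. apply exp_lt1; lra.
    intros n Hn.
    assert (HI : forall k : nat, inI None wmax (- Z.of_nat k)%Z).
    { intros k. apply inI_iff. split; [discriminate|]. intros M E. destruct Hb as [_ Hb].
      specialize (Hb M E). lia. }
    assert (Hrec := nu_rec None wmax f th (- Z.of_nat (S n))%Z Hb Hf (HI (S n))).
    replace (- Z.of_nat (S n) + 1)%Z with (- Z.of_nat n)%Z in Hrec by lia.
    specialize (Hrec (HI n)).
    assert (Hfp : 0 < f (- Z.of_nat n)%Z) by (apply Hf; auto).
    assert (Hl : ln (f (- Z.of_nat n)%Z) < y) by (apply HN; lia).
    assert (Hfy : f (- Z.of_nat n)%Z < exp y).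
    { rewrite <- (exp_ln (f (- Z.of_nat n)%Z)) by auto. apply exp_increasing. auto. }
    specialize (Hnn (- Z.of_nat n)%Z). assert (Hn1 := nu_nonneg None wmax f th (- Z.of_nat (S n))%Z Hb Hf).
    rewrite Rminus_def, exp_plus, exp_Ropp.
    assert (Hey := exp_pos y). assert (Het := exp_pos th).
    apply (Rmult_le_reg_l (exp th)); auto.
    rewrite <- Hrec.
    replace (exp th * (exp y * / exp th * nu None wmax f th (- Z.of_nat n)%Z))
      with (exp y * nu None wmax f th (- Z.of_nat n)%Z) by (field; lra).
    rewrite (Rmult_comm (exp y)). apply Rmult_le_compat_l; lra.
Qed.

Lemma nu_geo wmin wmax f th thlow thbar : bounds_ok wmin wmax -> fpos_prop wmin wmax f ->
  theta_bar_spec wmax f thbar -> Rbar_lt (Finite th) thbar ->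
  theta_low_spec wmin f thlow -> Rbar_lt thlow (Finite th) ->
  exists C r, 0 <= C /\ 0 < r < 1 /\
    forall z, nu wmin wmax f th z <= C * r ^ (Z.abs_nat z).
Proof.
  intros Hb Hf Hbar Hth1 Hlow Hth2.
  assert (Hnn := fun z => nu_nonneg wmin wmax f th z Hb Hf).
  destruct (nu_pos_side wmin wmax f th thbar Hb Hf Hbar Hth1) as [N1 [r1 [Hr1 H1]]].
  destruct (nu_neg_side wmin wmax f th thlow Hb Hf Hlow Hth2) as [N2 [r2 [Hr2 H2]]].
  set (r := Rmax r1 r2).
  assert (Hr : 0 < r < 1) by (unfold r; destruct (Rmax_Rle r1 r2 r1) as [_ _]; 
    split; [apply Rlt_le_trans with r1; [lra|apply Rmax_l]|apply Rmax_lub_lt; lra]).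
  destruct (geo (fun n => nu wmin wmax f th (Z.of_nat n)) r N1) as [C1 [HC1 HB1]].
  { lra. } { auto. }
  { intros n Hn. eapply Rle_trans. apply H1; auto. apply Rmult_le_compat_r; auto. apply Rmax_l. }
  destruct (geo (fun n => nu wmin wmax f th (- Z.of_nat n)%Z) r N2) as [C2 [HC2 HB2]].
  { lra. } { auto. }
  { intros n Hn. eapply Rle_trans. apply H2; auto. apply Rmult_le_compat_r; auto. apply Rmax_r. }
  exists (C1 + C2), r. split; [lra|]. split; auto. intros z.
  assert (Hp : 0 <= r ^ Z.abs_nat z) by (apply pow_le; lra).
  destruct (Z_le_gt_dec 0 z) as [Hz|Hz].
  - replace z with (Z.of_nat (Z.abs_nat z)) at 1 by lia.
    specialize (HB1 (Z.abs_nat z)). simpl in HB1. nra.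
  - replace z with (- Z.of_nat (Z.abs_nat z))%Z at 1 by lia.
    specialize (HB2 (Z.abs_nat z)). simpl in HB2. nra.
Qed.

Lemma gen_bound wmin wmax (P S : Z -> Z -> R) (f : Z -> R) :
  bounds_ok wmin wmax -> fpos_prop wmin wmax f ->
  (forall z, inI wmin wmax z -> 0 <= f z) ->
  (forall y z, inI wmin wmax y -> inI wmin wmax z -> inI wmin wmax (z + 1) ->
     P z y <= P (z + 1)%Z y /\ P y (z + 1)%Z <= P y z) ->
  (forall y z, inI wmin wmax y -> inI wmin wmax z -> P y z = ext0 wmax S y (z + 1) * f y) ->
  (forall a b, inI wmin wmax a -> inI wmin wmax b -> S a b = S b a) ->
  forall y z, inI wmin wmax y -> inI wmin wmax z ->
    P y z <= P 1%Z 0%Z * (f (Z.max y 1) / f (Z.min z 0 + 1)%Z).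
Proof.
  intros Hb Hfp Hf0 Hmon Hform Hsym y z Hy Hz.
  assert (I0 := inI_0 _ _ Hb). assert (I1 := inI_1 _ _ Hb).
  set (y' := Z.max y 1). set (z' := Z.min z 0).
  assert (Iy' : inI wmin wmax y') by (unfold y'; destruct (Z.max_spec y 1) as [[_ ->]|[_ ->]]; auto).
  assert (Iz' : inI wmin wmax z') by (unfold z'; destruct (Z.min_spec z 0) as [[_ ->]|[_ ->]]; auto).
  assert (Iz1 : inI wmin wmax (z' + 1)) by (apply (inI_conv _ _ z' 1); auto; unfold z'; lia).
  assert (Iy1 : inI wmin wmax (y' - 1)) by (apply (inI_conv _ _ 0 y'); auto; unfold y'; lia).
  assert (S1 : P y z <= P y' z).
  { apply (mono_Z wmin wmax (fun a => P a z)); auto; [|unfold y'; lia].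
    intros a Ha Ha1. apply (Hmon z a); auto. }
  assert (S2 : P y' z <= P y' z').
  { apply (anti_Z wmin wmax (fun a => P y' a)); auto; [|unfold z'; lia].
    intros a Ha Ha1. apply (Hmon y' a); auto. }
  assert (S3 : P (z' + 1)%Z (y' - 1)%Z <= P 1%Z (y' - 1)%Z).
  { apply (mono_Z wmin wmax (fun a => P a (y' - 1)%Z)); auto; [|unfold z'; lia].
    intros a Ha Ha1. apply (Hmon (y' - 1)%Z a); auto. }
  assert (S4 : P 1%Z (y' - 1)%Z <= P 1%Z 0%Z).
  { apply (anti_Z wmin wmax (fun a => P 1%Z a)); auto; [|unfold y'; lia].
    intros a Ha Ha1. apply (Hmon 1%Z a); auto. }
  assert (Hnex : forall a, inI wmin wmax a -> exceeds wmax a = false).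
  { intros a Ha. apply inI_iff in Ha. destruct Ha as [_ Ha]. unfold exceeds.
    destruct wmax as [M|]; auto. apply Z.ltb_ge. apply Ha; auto. }
  assert (Hid : P y' z' * f (z' + 1)%Z = f y' * P (z' + 1)%Z (y' - 1)%Z).
  { rewrite !Hform by auto. unfold ext0.
    replace (y' - 1 + 1)%Z with y' by lia.
    rewrite (Hnex y'), (Hnex (z' + 1)%Z) by auto. simpl.
    rewrite Hsym by auto. ring. }
  assert (Hfz : 0 < f (z' + 1)%Z) by (apply (fpos_gt wmin wmax f _ z'); auto; lia).
  assert (Hfy : 0 <= f y') by auto.
  assert (E : P y' z' = f y' * P (z' + 1)%Z (y' - 1)%Z / f (z' + 1)%Z).
  { rewrite <- Hid. field. lra. }
  fold y' z'. 
  apply Rle_trans with (P y' z'); [lra|]. rewrite E.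
  unfold Rdiv. rewrite <- Rmult_assoc. apply Rmult_le_compat_r. left; apply Rinv_0_lt_compat; auto.
  rewrite Rmult_comm. apply Rmult_le_compat_r; auto. lra.
Qed.

Lemma nu_shift_up wmin wmax f th C r : bounds_ok wmin wmax -> fpos_prop wmin wmax f ->
  (forall z, inI wmin wmax z -> 0 <= f z) -> 0 <= C -> 0 < r ->
  (forall z, nu wmin wmax f th z <= C * r ^ (Z.abs_nat z)) ->
  forall t, inI wmin wmax t ->
    nu wmin wmax f th t * f (Z.max t 1) <= C * (f 1%Z + exp th / r) * r ^ (Z.abs_nat t).
Proof.
  intros Hb Hfp Hf0 HC Hr Hnu t Ht.
  assert (I0 := inI_0 _ _ Hb). assert (I1 := inI_1 _ _ Hb).
  assert (Hf1 : 0 < f 1%Z) by (apply (fpos_gt wmin wmax f _ 0%Z); auto; lia).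
  assert (Hp : 0 <= r ^ Z.abs_nat t) by (apply pow_le; lra).
  assert (He : 0 < exp th / r) by (apply Rdiv_lt_0_compat; [apply exp_pos|lra]).
  destruct (Z_le_gt_dec t 0) as [Hz|Hz].
  - replace (Z.max t 1) with 1%Z by lia.
    assert (Hn0 := nu_nonneg wmin wmax f th t Hb Hfp).
    apply Rle_trans with (C * r ^ Z.abs_nat t * f 1%Z).
    + apply Rmult_le_compat_r; auto; lra.
    + assert (0 <= C * (exp th / r) * r ^ Z.abs_nat t) by (apply Rmult_le_pos; [apply Rmult_le_pos|]; lra).
      replace (C * (f 1%Z + exp th / r) * r ^ Z.abs_nat t) with
        (C * r ^ Z.abs_nat t * f 1%Z + C * (exp th / r) * r ^ Z.abs_nat t) by ring. lra.
  - replace (Z.max t 1) with t by lia.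
    assert (It1 : inI wmin wmax (t - 1)) by (apply (inI_conv _ _ 0 t); auto; lia).
    assert (Hrec := nu_rec wmin wmax f th (t - 1) Hb Hfp It1).
    replace (t - 1 + 1)%Z with t in Hrec by lia. rewrite (Hrec Ht).
    assert (Ha : Z.abs_nat t = S (Z.abs_nat (t - 1))) by lia.
    rewrite Ha. simpl pow.
    assert (Hq := Hnu (t - 1)%Z).
    assert (Hp' : 0 <= r ^ Z.abs_nat (t - 1)) by (apply pow_le; lra).
    assert (HCf : 0 <= C * f 1%Z * (r * r ^ Z.abs_nat (t - 1))) by (repeat apply Rmult_le_pos; lra).
    apply Rle_trans with (exp th * (C * r ^ Z.abs_nat (t - 1))).
    + apply Rmult_le_compat_l; auto. left; apply exp_pos.
    + replace (C * (f 1%Z + exp th / r) * (r * r ^ Z.abs_nat (t - 1)))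
        with (C * f 1%Z * (r * r ^ Z.abs_nat (t - 1)) + exp th * (C * r ^ Z.abs_nat (t - 1)))
        by (field; lra). lra.
Qed.

Lemma nu_shift_down wmin wmax f th C r : bounds_ok wmin wmax -> fpos_prop wmin wmax f ->
  (forall z, inI wmin wmax z -> 0 <= f z) -> 0 <= C -> 0 < r ->
  (forall z, nu wmin wmax f th z <= C * r ^ (Z.abs_nat z)) ->
  forall t, inI wmin wmax t ->
    nu wmin wmax f th t / f (Z.min t 0 + 1)%Z <= C * (/ f 1%Z + exp (- th) / r) * r ^ (Z.abs_nat t).
Proof.
  intros Hb Hfp Hf0 HC Hr Hnu t Ht.
  assert (I0 := inI_0 _ _ Hb). assert (I1 := inI_1 _ _ Hb).
  assert (Hf1 : 0 < f 1%Z) by (apply (fpos_gt wmin wmax f _ 0%Z); auto; lia).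
  assert (Hp : 0 <= r ^ Z.abs_nat t) by (apply pow_le; lra).
  assert (He : 0 < exp (- th) / r) by (apply Rdiv_lt_0_compat; [apply exp_pos|lra]).
  assert (Hi1 : 0 < / f 1%Z) by (apply Rinv_0_lt_compat; auto).
  destruct (Z_le_gt_dec 0 t) as [Hz|Hz].
  - replace (Z.min t 0 + 1)%Z with 1%Z by lia.
    assert (Hn0 := nu_nonneg wmin wmax f th t Hb Hfp).
    unfold Rdiv at 1.
    apply Rle_trans with (C * r ^ Z.abs_nat t * / f 1%Z).
    + apply Rmult_le_compat_r; auto; lra.
    + assert (0 <= C * (exp (- th) / r) * r ^ Z.abs_nat t) by (apply Rmult_le_pos; [apply Rmult_le_pos|]; lra).
      replace (C * (/ f 1%Z + exp (- th) / r) * r ^ Z.abs_nat t) with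
        (C * r ^ Z.abs_nat t * / f 1%Z + C * (exp (- th) / r) * r ^ Z.abs_nat t) by ring. lra.
  - replace (Z.min t 0) with t by lia.
    assert (It1 : inI wmin wmax (t + 1)) by (apply (inI_conv _ _ t 0); auto; lia).
    assert (Hrec := nu_rec wmin wmax f th t Hb Hfp Ht It1).
    assert (Hft : 0 < f (t + 1)%Z) by (apply (fpos_gt wmin wmax f _ t); auto; lia).
    assert (E : nu wmin wmax f th t / f (t + 1)%Z = exp (- th) * nu wmin wmax f th (t + 1)).
    { rewrite exp_Ropp. assert (Het := exp_pos th).
      assert (Hn : nu wmin wmax f th t = nu wmin wmax f th (t + 1) * f (t + 1)%Z * / exp th)
        by (rewrite Hrec; field; lra).
      rewrite Hn. field. split; lra. }
    rewrite E.
    assert (Ha : Z.abs_nat t = S (Z.abs_nat (t + 1))) by lia.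
    rewrite Ha. simpl pow.
    assert (Hq := Hnu (t + 1)%Z).
    assert (Hp' : 0 <= r ^ Z.abs_nat (t + 1)) by (apply pow_le; lra).
    assert (HCf : 0 <= C * / f 1%Z * (r * r ^ Z.abs_nat (t + 1))) by (repeat apply Rmult_le_pos; lra).
    apply Rle_trans with (exp (- th) * (C * r ^ Z.abs_nat (t + 1))).
    + apply Rmult_le_compat_l; auto. left; apply exp_pos.
    + replace (C * (/ f 1%Z + exp (- th) / r) * (r * r ^ Z.abs_nat (t + 1)))
        with (C * / f 1%Z * (r * r ^ Z.abs_nat (t + 1)) + exp (- th) * (C * r ^ Z.abs_nat (t + 1)))
        by (field; lra). lra.
Qed.

Lemma INR_abs y : INR (Z.abs_nat y) = Rabs (IZR y).
Proof. rewrite INR_IZR_INZ, Zabs2Nat.id_abs, abs_IZR. reflexivity. Qed.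

Lemma poly_le d (c : nat -> nat -> R) Y Z : 0 <= Y -> 0 <= Z ->
  sum_f_R0 (fun i => sum_f_R0 (fun j => c i j * Y ^ i * Z ^ j) d) d <=
  sum_f_R0 (fun i => sum_f_R0 (fun j => Rabs (c i j)) d) d * ((1 + Y) ^ d * (1 + Z) ^ d).
Proof.
  intros HY HZ. set (W := (1 + Y) ^ d * (1 + Z) ^ d).
  apply Rle_trans with (sum_f_R0 (fun i => sum_f_R0 (fun j => Rabs (c i j) * W) d) d).
  - apply sum_Rle. intros i Hi. apply sum_Rle. intros j Hj.
    assert (HYi : Y ^ i <= (1 + Y) ^ d).
    { apply Rle_trans with ((1 + Y) ^ i). apply pow_incr; lra. apply Rle_pow; [lra|auto]. }
    assert (HZj : Z ^ j <= (1 + Z) ^ d).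
    { apply Rle_trans with ((1 + Z) ^ j). apply pow_incr; lra. apply Rle_pow; [lra|auto]. }
    assert (0 <= Y ^ i) by (apply pow_le; lra). assert (0 <= Z ^ j) by (apply pow_le; lra).
    assert (0 <= Rabs (c i j)) by apply Rabs_pos.
    apply Rle_trans with (Rabs (c i j) * Y ^ i * Z ^ j).
    + apply Rmult_le_compat_r; auto. apply Rmult_le_compat_r; auto. apply Rle_abs.
    + unfold W. rewrite Rmult_assoc. apply Rmult_le_compat_l; auto.
      apply Rmult_le_compat; auto.
  - right. rewrite Rmult_comm, scal_sum. apply sum_eq. intros i Hi.
    rewrite Rmult_comm, scal_sum. apply sum_eq. intros j Hj. ring.
Qed.

Lemma sumZ_le N F G : (forall z, F z <= G z) -> sumZ N F <= sumZ N G.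
Proof. exact (lsum_le (zrange N) F G). Qed.
Lemma sumZ_ext N F G : (forall z, F z = G z) -> sumZ N F = sumZ N G.
Proof. intros H. apply Rle_antisym; apply sumZ_le; intros z; rewrite H; lra. Qed.
Lemma sumZ_scal N F c : sumZ N (fun z => c * F z) = c * sumZ N F.
Proof. exact (lsum_scal (zrange N) F c). Qed.
Lemma sumZ_nonneg N F : (forall z, 0 <= F z) -> 0 <= sumZ N F.
Proof. exact (lsum_nonneg (zrange N) F). Qed.

Theorem lemmaC2
  (wmin wmax : option Z) (p q : Z -> Z -> R)
  (sp sq : Z -> Z -> R) (f : Z -> R) (thlow thbar : Rbar)
  (Hbounds : bounds_ok wmin wmax)
  (Hnn : rates_nonneg wmin wmax p q)
  (HR1 : rates_R1 wmin wmax p q) (HR2 : rates_R2 wmin wmax p q) (HR3 : rates_R3 wmin wmax p q)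
  (HR4 : rates_R4 wmin wmax p q sp sq f)
  (Hbar : theta_bar_spec wmax f thbar) (Hlow : theta_low_spec wmin f thlow)
  (Hlt : Rbar_lt thlow thbar)
  (g : Z -> Z -> R) (Hg0 : forall y z, 0 <= g y z) (Hgpoly : poly_bounded g)
  (th : R) (Hth1 : Rbar_lt thlow (Finite th)) (Hth2 : Rbar_lt (Finite th) thbar) :
  finite_expectation2 wmin wmax f th (fun y z => (p y z + q y z) * g y z).
Proof.
  destruct HR4 as [Hsym [Hf0 [_ [Hfpos Hform]]]].
  assert (Hfp : fpos_prop wmin wmax f) by exact Hfpos.
  assert (I0 := inI_0 _ _ Hbounds). assert (I1 := inI_1 _ _ Hbounds).
  destruct (nu_geo wmin wmax f th thlow thbar Hbounds Hfp Hbar Hth2 Hlow Hth1)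
    as [C [r [HC [Hr Hnu]]]].
  assert (Hf1 : 0 < f 1%Z) by (apply (fpos_gt wmin wmax f _ 0%Z); auto; lia).
  set (C1 := C * (f 1%Z + exp th / r)).
  set (C2 := C * (/ f 1%Z + exp (- th) / r)).
  assert (HC1 : 0 <= C1).
  { unfold C1. apply Rmult_le_pos; auto. assert (0 < exp th / r) by (apply Rdiv_lt_0_compat; [apply exp_pos|lra]). lra. }
  assert (HC2 : 0 <= C2).
  { unfold C2. apply Rmult_le_pos; auto. assert (0 < exp (- th) / r) by (apply Rdiv_lt_0_compat; [apply exp_pos|lra]).
    assert (0 < / f 1%Z) by (apply Rinv_0_lt_compat; auto). lra. }
  assert (Hup := nu_shift_up wmin wmax f th C r Hbounds Hfp Hf0 HC (proj1 Hr) Hnu). fold C1 in Hup.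
  assert (Hdown := nu_shift_down wmin wmax f th C r Hbounds Hfp Hf0 HC (proj1 Hr) Hnu). fold C2 in Hdown.
  assert (Hpb := gen_bound wmin wmax p sp f Hbounds Hfp Hf0).
  specialize (Hpb ltac:(intros y z Hy Hz Hz1; destruct (HR2 y z Hy Hz Hz1) as [h1 [h2 _]]; split; lra)).
  specialize (Hpb ltac:(intros y z Hy Hz; exact (proj1 (Hform y z Hy Hz)))).
  specialize (Hpb ltac:(intros a b Ha Hb; exact (proj1 (Hsym a b Ha Hb)))).
  assert (Hqb := gen_bound wmin wmax (fun a b => q b a) (fun a b => sq b a) f Hbounds Hfp Hf0).
  specialize (Hqb ltac:(intros y z Hy Hz Hz1; cbv beta; destruct (HR2 y z Hy Hz Hz1) as [_ [_ [h3 h4]]]; split; lra)).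
  specialize (Hqb ltac:(intros y z Hy Hz; cbv beta; rewrite (proj2 (Hform z y Hz Hy)); unfold ext0;
      rewrite orb_comm; reflexivity)).
  specialize (Hqb ltac:(intros a b Ha Hb; cbv beta; exact (proj2 (Hsym b a Hb Ha)))).
  simpl in Hqb.
  destruct Hgpoly as [d [c Hc]].
  set (D := sum_f_R0 (fun i => sum_f_R0 (fun j => Rabs (c i j)) d) d).
  assert (HD : 0 <= D).
  { unfold D. apply cond_pos_sum. intros i. apply cond_pos_sum. intros j. apply Rabs_pos. }
  destruct (poly_geo d r Hr) as [K [HK HKb]].
  set (sg := (1 + r) / 2) in HKb.
  set (a := fun t : Z => r ^ (Z.abs_nat t) * (1 + INR (Z.abs_nat t)) ^ d).
  assert (Ha0 : forall t, 0 <= a t).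
  { intros t. unfold a. apply Rmult_le_pos; apply pow_le; [lra|]. pose proof (pos_INR (Z.abs_nat t)); lra. }
  set (Cp := p 1%Z 0%Z). set (Cq := q 0%Z 1%Z).
  assert (HCp : 0 <= Cp) by (apply (Hnn 1%Z 0%Z); auto).
  assert (HCq : 0 <= Cq) by (apply (Hnn 0%Z 1%Z); auto).
  set (E := (Cp + Cq) * (C1 * C2) * D).
  assert (HE : 0 <= E) by (unfold E; apply Rmult_le_pos; [apply Rmult_le_pos|]; nra).
  assert (Hnu0 := fun z => nu_nonneg wmin wmax f th z Hbounds Hfp).
  assert (Key : forall y z, inI wmin wmax y -> inI wmin wmax z ->
     nu wmin wmax f th y * nu wmin wmax f th z * ((p y z + q y z) * g y z) <= E * a y * a z).
  { intros y z Hy Hz.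
    set (ny := nu wmin wmax f th y). set (nz := nu wmin wmax f th z).
    assert (Hny : 0 <= ny) by apply Hnu0. assert (Hnz : 0 <= nz) by apply Hnu0.
    assert (Hpy := Hnn y z Hy Hz).
    set (ry := r ^ Z.abs_nat y). set (rz := r ^ Z.abs_nat z).
    assert (Hry : 0 <= ry) by (apply pow_le; lra). assert (Hrz : 0 <= rz) by (apply pow_le; lra).
    assert (HP : ny * nz * p y z <= Cp * ((C1 * ry) * (C2 * rz))).
    { specialize (Hpb y z Hy Hz). fold Cp in Hpb.
      assert (Iy' : inI wmin wmax (Z.max y 1)) by (destruct (Z.max_spec y 1) as [[_ ->]|[_ ->]]; auto).
      assert (Izm : inI wmin wmax (Z.min z 0)) by (destruct (Z.min_spec z 0) as [[_ ->]|[_ ->]]; auto).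
      assert (Iz' : inI wmin wmax (Z.min z 0 + 1)) by (apply (inI_conv _ _ (Z.min z 0) 1); auto; lia).
      assert (Hfz : 0 < f (Z.min z 0 + 1)%Z) by (apply (fpos_gt wmin wmax f _ (Z.min z 0)); auto; lia).
      assert (Hfy : 0 <= f (Z.max y 1)) by auto.
      apply Rle_trans with (ny * nz * (Cp * (f (Z.max y 1) / f (Z.min z 0 + 1)%Z))).
      { apply Rmult_le_compat_l; auto. apply Rmult_le_pos; auto. }
      replace (ny * nz * (Cp * (f (Z.max y 1) / f (Z.min z 0 + 1)%Z))) with
        (Cp * ((ny * f (Z.max y 1)) * (nz / f (Z.min z 0 + 1)%Z))) by (field; lra).
      apply Rmult_le_compat_l; auto.
      apply Rmult_le_compat.
      - apply Rmult_le_pos; auto.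
      - apply Rdiv_le_0_compat; auto.
      - apply Hup; auto.
      - apply Hdown; auto. }
    assert (HQ : ny * nz * q y z <= Cq * ((C1 * rz) * (C2 * ry))).
    { specialize (Hqb z y Hz Hy). fold Cq in Hqb.
      assert (Iz' : inI wmin wmax (Z.max z 1)) by (destruct (Z.max_spec z 1) as [[_ ->]|[_ ->]]; auto).
      assert (Iym : inI wmin wmax (Z.min y 0)) by (destruct (Z.min_spec y 0) as [[_ ->]|[_ ->]]; auto).
      assert (Iy' : inI wmin wmax (Z.min y 0 + 1)) by (apply (inI_conv _ _ (Z.min y 0) 1); auto; lia).
      assert (Hfy : 0 < f (Z.min y 0 + 1)%Z) by (apply (fpos_gt wmin wmax f _ (Z.min y 0)); auto; lia).
      assert (Hfz : 0 <= f (Z.max z 1)) by auto.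
      apply Rle_trans with (ny * nz * (Cq * (f (Z.max z 1) / f (Z.min y 0 + 1)%Z))).
      { apply Rmult_le_compat_l; auto. apply Rmult_le_pos; auto. }
      replace (ny * nz * (Cq * (f (Z.max z 1) / f (Z.min y 0 + 1)%Z))) with
        (Cq * ((nz * f (Z.max z 1)) * (ny / f (Z.min y 0 + 1)%Z))) by (field; lra).
      apply Rmult_le_compat_l; auto.
      apply Rmult_le_compat.
      - apply Rmult_le_pos; auto.
      - apply Rdiv_le_0_compat; auto.
      - apply Hup; auto.
      - apply Hdown; auto. }
    assert (Hg := Hc y z).
    assert (Hpl := poly_le d c (Rabs (IZR y)) (Rabs (IZR z)) (Rabs_pos _) (Rabs_pos _)).
    fold D in Hpl. rewrite <- !INR_abs in Hpl.
    set (wy := (1 + INR (Z.abs_nat y)) ^ d) in Hpl.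
    set (wz := (1 + INR (Z.abs_nat z)) ^ d) in Hpl.
    assert (HG : g y z <= D * (wy * wz)).
    { eapply Rle_trans; [|exact Hpl]. rewrite <- !INR_abs in Hg. exact Hg. }
    assert (Hpq : ny * nz * (p y z + q y z) <= (Cp + Cq) * (C1 * C2) * (ry * rz)).
    { replace ((Cp + Cq) * (C1 * C2) * (ry * rz)) with
        (Cp * ((C1 * ry) * (C2 * rz)) + Cq * ((C1 * rz) * (C2 * ry))) by ring.
      rewrite Rmult_plus_distr_l. lra. }
    rewrite <- Rmult_assoc.
    apply Rle_trans with (((Cp + Cq) * (C1 * C2) * (ry * rz)) * (D * (wy * wz))).
    { apply Rmult_le_compat; auto.
      apply Rmult_le_pos; [apply Rmult_le_pos; auto|lra]. }
    right. unfold E, a. fold ry rz wy wz. ring. }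
  set (Kz := / Zpart wmin wmax f th).
  set (Q := Kz * Kz * E).
  assert (HQ : 0 <= Q) by (unfold Q; apply Rmult_le_pos; [apply Rle_0_sqr|auto]).
  assert (Hmu : forall y, inI wmin wmax y -> mu wmin wmax f th y = Kz * nu wmin wmax f th y).
  { intros y Hy. unfold mu, Kz. rewrite nu_in by auto. unfold Rdiv. rewrite Rinv_mult. ring. }
  assert (HsigA : 0 <= sg < 1) by (unfold sg; lra).
  set (S := 2 * (K / (1 - sg))).
  assert (HSa : forall N, sumZ N a <= S).
  { intros N. unfold a.
    eapply Rle_trans.
    apply (sumZ_abs_le (fun n => r ^ n * (1 + INR n) ^ d) N).
    { intros n. apply Rmult_le_pos; apply pow_le; [lra|]. pose proof (pos_INR n); lra. }
    unfold S. apply Rmult_le_compat_l; [lra|].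
    eapply Rle_trans; [|apply (geo_sum K sg N HK HsigA)].
    apply sum_Rle. intros n _. apply HKb. }
  exists (Q * (S * S)). intros N. unfold box_expect.
  apply Rle_trans with (sumZ N (fun y => sumZ N (fun z => Q * a y * a z))).
  { apply sumZ_le. intros y. apply sumZ_le. intros z.
    destruct (inIb wmin wmax y) eqn:Ey; destruct (inIb wmin wmax z) eqn:Ez; simpl;
      try (assert (0 <= a y) by auto; assert (0 <= a z) by auto;
           apply Rmult_le_pos; [apply Rmult_le_pos|]; auto; fail).
    rewrite !Hmu by auto.
    specialize (Key y z Ey Ez).
    replace (Kz * nu wmin wmax f th y * (Kz * nu wmin wmax f th z) *
       ((p y z + q y z) * g y z)) with
      ((Kz * Kz) * (nu wmin wmax f th y * nu wmin wmax f th z * ((p y z + q y z) * g y z))) by ring.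
    unfold Q. replace (Kz * Kz * E * a y * a z) with ((Kz * Kz) * (E * a y * a z)) by ring.
    apply Rmult_le_compat_l; auto. apply Rle_0_sqr. }
  rewrite (sumZ_ext N _ (fun y => (Q * sumZ N a) * a y)).
  2:{ intros y. transitivity ((Q * a y) * sumZ N a); [|ring]. rewrite <- sumZ_scal. apply sumZ_ext. intros z. ring. }
  rewrite sumZ_scal.
  assert (H0a : 0 <= sumZ N a) by (apply sumZ_nonneg; auto).
  assert (HSN := HSa N).
  apply Rle_trans with (Q * (sumZ N a * sumZ N a)); [right; ring|].
  apply Rmult_le_compat_l; auto. apply Rmult_le_compat; auto.
Qed.
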